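(* Consider a Why Query with the \texttt{SUM} aggregate, an attribute $X$ with filters $p_1,\dots,p_m$, a threshold $\varepsilon$ and a conciseness parameter $\sigma>0$. If $P^*\subseteq\{p_1,\dots,p_m\}$ is an optimal explanation, i.e. $P^*$ maximizes $\rho_P-\sigma|P|$ over all $P\subseteq\{p_1,\dots,p_m\}$, then $\Delta(D_p)>0$ for every $p\in P^*$.
   Context: $D$ is a finite table of rows; $M$ is a numerical column; $s_1,s_2$ are two disjoint sets of rows (sibling subspaces). $X$ is a categorical column with values $x_1,\dots,x_m$; filter $p_i$ is the condition $X=x_i$. A predicate is a set $P\subseteq\{p_1,\dots,p_m\}$ and $D_P$ is the set of rows whose $X$-value belongs to $P$; $|P|$ is the number of filters in $P$; $D'-D''$ denotes set difference of rows. For $D'\subseteq D$, $\Delta(D')=\sum_{t\in D'\cap s_1}t[M]-\sum_{t\in D'\cap s_2}t[M]$. It is assumed $\Delta(D)>0$. W-causality: $P$ is an actual cause if there exists $\Gamma\subseteq\{p_1,\dots,p_m\}$ with $\Gamma\cap P=\emptyset$ (a valid contingency) such that $\Delta(D-D_\Gamma-D_P)\le\varepsilon<\Delta(D-D_\Gamma)$. W-responsibility: for an actual cause $P$, $\rho_P=\frac{1}{1+\min_\Gamma|\Gamma|_W}$ where $\Gamma$ ranges over valid contingencies for $P$ and $|\Gamma|_W=\max\left(\frac{\Delta(D-D_P)-\Delta(D-D_P-D_\Gamma)}{\Delta(D)},0\right)$; $\rho_P=0$ if $P$ is not an actual cause. *)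

(* Defs.v *)
From mathcomp Require Import all_boot all_order all_algebra.
Set Implicit Arguments. Unset Strict Implicit. Unset Printing Implicit Defensive.
Import Order.TTheory GRing.Theory Num.Theory.
Local Open Scope ring_scope.

(* The table D is the set of all rows of the finite type T (D = [set: T]).
   M : T -> R is the numerical column, s1 s2 : {set T} the sibling subspaces,
   X : T -> 'I_m the categorical column (value x_i encoded as i : 'I_m),
   a predicate is a set P : {set 'I_m} of filters p_i := (X = x_i). *)

Section WhyQuery.
Variables (R : realFieldType) (T : finType) (m : nat).
Variables (M : T -> R) (s1 s2 : {set T}) (X : T -> 'I_m) (eps : R).

Definition DP (P : {set 'I_m}) : {set T} := [set t | X t \in P].

Definition Delta (D' : {set T}) : R :=
  \sum_(t in D' :&: s1) M t - \sum_(t in D' :&: s2) M t.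

Definition valid_contingency (P G : {set 'I_m}) : bool :=
  [disjoint G & P] &&
  (Delta ([set: T] :\: DP G :\: DP P) <= eps) &&
  (eps < Delta ([set: T] :\: DP G)).

Definition actual_cause (P : {set 'I_m}) : Prop :=
  exists G : {set 'I_m}, valid_contingency P G.

Definition wsize (P G : {set 'I_m}) : R :=
  Num.max ((Delta ([set: T] :\: DP P) - Delta ([set: T] :\: DP P :\: DP G))
            / Delta [set: T]) 0.

Definition rho (P : {set 'I_m}) : R :=
  match [pick G | valid_contingency P G] with
  | Some G0 =>
      1 / (1 + \big[Num.min/wsize P G0]_(G | valid_contingency P G) wsize P G)
  | None => 0
  end.

Definition objective (sigma : R) (P : {set 'I_m}) : R :=
  rho P - sigma * (#|P|)%:R.

Definition optimal_explanation (sigma : R) (P : {set 'I_m}) : Prop :=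
  forall Q : {set 'I_m}, objective sigma Q <= objective sigma P.

End WhyQuery.

(* Main.v *)
Require Import Defs.
From mathcomp Require Import all_boot all_order all_algebra.
From mathcomp Require Import lra.
Import Order.TTheory GRing.Theory Num.Theory.
Local Open Scope ring_scope.

Section Aux.
Variables (R : realFieldType) (T : finType) (m : nat).
Variables (M : T -> R) (s1 s2 : {set T}) (X : T -> 'I_m) (eps : R).

Lemma Delta_split (A B : {set T}) :
  Delta M s1 s2 A = Delta M s1 s2 (A :&: B) + Delta M s1 s2 (A :\: B).
Proof.
rewrite /Delta (big_setID B) [X in _ - X](big_setID B) /=.
rewrite [(A :&: B) :&: s1]setIAC [(A :&: B) :&: s2]setIAC.
rewrite !setDE [(A :&: ~: B) :&: s1]setIAC [(A :&: ~: B) :&: s2]setIAC.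
rewrite -!setDE. set a := \sum_(i in _) _. set b := \sum_(i in _) _.
set c := \sum_(i in _) _. set d := \sum_(i in _) _.
rewrite opprD addrACA //.
Qed.

Lemma bigmin_le (I : eqType) (s : seq I) (P : pred I) (F : I -> R) x0 i :
  i \in s -> P i -> \big[Num.min/x0]_(j <- s | P j) F j <= F i.
Proof.
elim: s => // a s IH; rewrite inE big_cons => /orP [/eqP <- -> | Hi Pi].
  by rewrite ge_min lexx.
case: (P a); last exact: IH.
by rewrite ge_min (IH Hi Pi) orbT.
Qed.

Lemma wsize_ge0 (P G : {set 'I_m}) : 0 <= wsize M s1 s2 X P G.
Proof. by rewrite /wsize le_max lexx orbT. Qed.

Lemma rho_ge0 (P : {set 'I_m}) : 0 <= rho M s1 s2 X eps P.
Proof.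
rewrite /rho; case: pickP => // G0 _.
rewrite div1r invr_ge0; apply: addr_ge0 => //.
apply: (big_ind (fun x => 0 <= x)) => //; first exact: wsize_ge0.
by move=> x y hx hy; rewrite le_min hx hy.
by move=> *; exact: wsize_ge0.
Qed.

Lemma wsize_disj (P G : {set 'I_m}) : [disjoint G & P] ->
  wsize M s1 s2 X P G = Num.max (Delta M s1 s2 (DP X G) / Delta M s1 s2 [set: T]) 0.
Proof.
move=> HGP; rewrite /wsize.
rewrite (Delta_split ([set: T] :\: DP X P) (DP X G)) addrK.
congr (Num.max (_ / _) _); congr Delta; apply/setP => t.
rewrite /DP !inE andbT; apply/andP/idP => [[]//|h]; split => //.
by rewrite (disjointFr HGP h).
Qed.

End Aux.

Theorem proposition3p14 (R : realFieldType) (T : finType) (m : nat)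
  (M : T -> R) (s1 s2 : {set T}) (X : T -> 'I_m) (eps sigma : R)
  (Hdisj : [disjoint s1 & s2])
  (HDpos : 0 < Delta M s1 s2 [set: T])
  (Hsigma : 0 < sigma)
  (Pstar : {set 'I_m})
  (Hopt : optimal_explanation M s1 s2 X eps sigma Pstar) :
  forall p : 'I_m, p \in Pstar -> 0 < Delta M s1 s2 (DP X [set p]).
Proof.
move=> p Hp; rewrite ltNge; apply/negP => Hle.
set Q := Pstar :\ p.
have Hcard : #|Pstar| = (#|Q|).+1 by rewrite (cardsD1 p Pstar) Hp.
move: Hopt; rewrite /optimal_explanation => Hopt.
case HpickP : [pick G | valid_contingency M s1 s2 X eps Pstar G] => [G0|].
-
  have vcQ : forall G, valid_contingency M s1 s2 X eps Pstar G ->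
      valid_contingency M s1 s2 X eps Q G.
    move=> G /andP [/andP [Hd H1] H2]; rewrite /valid_contingency H2 andbT.
    have HdQ : [disjoint G & Q].
      apply: disjointWr Hd; exact: subD1set.
    rewrite HdQ /=.
    have HpG : p \notin G.
      by apply/negP => hG; rewrite (disjointFr Hd hG) in Hp.
    rewrite (@Delta_split _ _ _ _ _ _ (DP X [set p])).
    have -> : ([set: T] :\: DP X G :\: DP X Q) :&: DP X [set p] = DP X [set p].
      apply/setP => t; rewrite /DP !inE; case: (X t =P p) => [->|]; last by rewrite andbF.
      by rewrite HpG.
    have -> : [set: T] :\: DP X G :\: DP X Q :\: DP X [set p] =
              [set: T] :\: DP X G :\: DP X Pstar.
      apply/setP => t; rewrite /DP !inE.
      case: (X t =P p) => [->|_].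
      by rewrite Hp.
      by [].
    by have := lerD Hle H1; rewrite add0r.
  have HG0 := HpickP; move: HpickP; case: pickP => // G0' HG0' [EG]; subst G0'.
  case HpickQ : [pick G | valid_contingency M s1 s2 X eps Q G] => [G1|]; last first.
    by move: HpickQ; case: pickP => // /(_ G0); rewrite (vcQ _ HG0').
  have HQ1 := HpickQ; move: HpickQ; case: pickP => // G1' HG1 [EG]; subst G1'.
  have Hw : forall G, valid_contingency M s1 s2 X eps Pstar G ->
      wsize M s1 s2 X Q G = wsize M s1 s2 X Pstar G.
    move=> G HG; have := vcQ _ HG; move: HG => /andP[/andP[d1 _] _] /andP[/andP[d2 _] _].
    by rewrite !wsize_disj.
  set mQ := \big[Num.min/wsize M s1 s2 X Q G1]_(G | valid_contingency M s1 s2 X eps Q G)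
              wsize M s1 s2 X Q G.
  set mP := \big[Num.min/wsize M s1 s2 X Pstar G0]_(G | valid_contingency M s1 s2 X eps Pstar G)
              wsize M s1 s2 X Pstar G.
  have mQle : forall G, valid_contingency M s1 s2 X eps Q G -> mQ <= wsize M s1 s2 X Q G.
    move=> G HG; rewrite /mQ; apply: bigmin_le => //; by rewrite mem_index_enum.
  have HmQP : mQ <= mP.
    rewrite /mP; apply: (big_ind (fun x => mQ <= x)).
    - by rewrite -Hw // mQle // vcQ.
    - by move=> x y hx hy; rewrite le_min hx hy.
    - by move=> G HG; rewrite -Hw // mQle // vcQ.
  have mQ0 : 0 <= mQ.
    rewrite /mQ; apply: (big_ind (fun x => 0 <= x)) => //; first exact: wsize_ge0.
    by move=> x y hx hy; rewrite le_min hx hy.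
    by move=> *; exact: wsize_ge0.
  have Hrho : rho M s1 s2 X eps Pstar <= rho M s1 s2 X eps Q.
    rewrite /rho HG0 HQ1 -/mP -/mQ !div1r lef_pV2 ?posrE ?lerD2l //.
    - apply: (lt_le_trans ltr01); rewrite lerDl; exact: le_trans HmQP.
    - by apply: (lt_le_trans ltr01); rewrite lerDl.
  have := Hopt Q; rewrite /objective Hcard -addn1 natrD mulrDr mulr1.
  have : 0 < sigma := Hsigma.
  move: Hrho; set a := rho _ _ _ _ _ Pstar; set b := rho _ _ _ _ _ Q.
  set c := sigma * _; move=> *; lra.
- have := Hopt set0; rewrite /objective cards0 mulr0 subr0 {2}/rho HpickP Hcard.
  have := @rho_ge0 _ _ _ M s1 s2 X eps set0.
  have : 0 <= sigma * (#|Q|)%:R by rewrite mulr_ge0 // ltW.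
  rewrite -addn1 natrD mulrDr mulr1.
  set a := rho _ _ _ _ _ _; set c := sigma * _ => *; lra.
Qed.
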